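(* Assume $\tau_1\tau_2\|K\|^2\le1/2$ and $\tau_1\le1/(2L)$, that $x_0\in[0,1]^n$ and $y_0\in\mathbb R_+^{m_1}\times\mathbb R^{m_2}$, and that $\Phi$ is bounded below by $\Phi_*$ (i.e., $\Phi(x,y)\ge\Phi_*$ for all $x,y$). For $k\ge1$ define the residuals \[s_k^x=\frac{x_{k-1}-x_k}{\tau_1}+\nabla_x\hat{\mathcal L}(x_k,y_k)-\nabla_x\hat{\mathcal L}(x_{k-1},y_k),\qquad s_k^y=\frac{y_{k-1}-y_k}{\tau_2}-\nabla_y\hat{\mathcal L}(x_k,y_k)+\nabla_y\hat{\mathcal L}(\bar x_{k-1},y_k).\] Then for every $N\ge1$ there exists $k_0\le N$ such that \[s^x_{k_0}\in\nabla_x\hat{\mathcal L}(x_{k_0},y_{k_0})+\partial h_1(x_{k_0}),\qquad s^y_{k_0}\in-\nabla_y\hat{\mathcal L}(x_{k_0},y_{k_0})+\partial h_2(y_{k_0}),\] and \[\|s^x_{k_0}\|+\|s^y_{k_0}\|\le2\left[\left(2\|K\|+\frac3{2\tau_1}\right)^2\tau_1+\frac1{\tau_2}\right]^{1/2}\left[\frac{\Phi(x_0,y_0)-\Phi_*}{N}+\frac{2}{\tau_1N}\sum_{k=1}^N\|x_{k-1}\|^2+4\tau_2\|r\|^2\right]^{1/2}.\]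
   Context: Let $n,m_1,m_2$ be positive integers, $Q\in\mathbb R^{n\times n}$ symmetric, $c\in\mathbb R^n$, $A\in\mathbb R^{m_1\times n}$, $b\in\mathbb R^{m_1}$, $B\in\mathbb R^{m_2\times n}$, $d\in\mathbb R^{m_2}$. Let $K:=-\begin{pmatrix}A\\ B\end{pmatrix}$ and $r:=(b;d)$. Fix $\rho\ge0$ and let $\mathbf 1$ be the all-ones vector. Define $\hat{\mathcal L}(x,y):=\langle x,Qx\rangle+\langle c,x\rangle+\langle y,Kx+r\rangle+\rho\langle x,\mathbf 1-x\rangle$ (no convexity assumed), so $\nabla_x\hat{\mathcal L}(x,y)=c+\rho\mathbf 1+K^\top y+2Qx-2\rho x$ and $\nabla_y\hat{\mathcal L}(x,y)=Kx+r$. Let $Y:=\mathbb R_+^{m_1}\times\mathbb R^{m_2}$, $h_1$ the indicator of $[0,1]^n$, $h_2$ the indicator of $Y$ ($0$ on the set, $+\infty$ outside); $\partial h_1,\partial h_2$ denote their (convex) subdifferentials. $\Phi(x,y):=\hat{\mathcal L}(x,y)+h_1(x)-h_2(y)$. $L:=2(\|Q\|+\rho)$ with spectral norm. PDHG iterates with step sizes $\tau_1,\tau_2>0$: $x_{-1}:=x_0$, $\bar x_0:=x_0$, and for $k\ge1$: $y_k=\Pi_Y(y_{k-1}+\tau_2(K\bar x_{k-1}+r))$, $x_k=\Pi_{[0,1]^n}(x_{k-1}-\tau_1\nabla_x\hat{\mathcal L}(x_{k-1},y_k))$, $\bar x_k=2x_k-x_{k-1}$, with $\Pi$ the Euclidean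 projection. *)

(* Defs.v *)
From HB Require Import structures.
From mathcomp Require Import all_boot all_order all_algebra.
From mathcomp Require Import all_classical all_reals.
From mathcomp Require Import ereal.
Unset Printing Implicit Defensive.
Import Order.TTheory GRing.Theory Num.Theory.
Local Open Scope ring_scope.
Local Open Scope classical_set_scope.

Section Defs.
Context {R : realType}.

Definition dotv {n : nat} (u v : 'cV[R]_n) : R := \sum_(i < n) u i 0 * v i 0.
Definition enorm {n : nat} (u : 'cV[R]_n) : R := Num.sqrt (dotv u u).

Definition opnorm {m n : nat} (A : 'M[R]_(m, n)) : R :=
  sup [set enorm (A *m v) | v in [set v : 'cV[R]_n | enorm v <= 1]].

Definition is_proj {n : nat} (C : set 'cV[R]_n) (z p : 'cV[R]_n) : Prop :=
  C p /\ forall q, C q -> enorm (z - p) <= enorm (z - q).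

Definition indic {n : nat} (C : set 'cV[R]_n) (z : 'cV[R]_n) : \bar R :=
  if `[< C z >] then 0%E else +oo%E.

Definition subdiff {n : nat} (h : 'cV[R]_n -> \bar R) (z : 'cV[R]_n) : set 'cV[R]_n :=
  [set v | h z \is a fin_num /\
           forall w, (h z + (dotv v (w - z))%:E <= h w)%E].

Definition box01 (n : nat) : set 'cV[R]_n :=
  [set x | forall i, 0 <= x i 0 <= 1].

Definition Yset (m1 m2 : nat) : set 'cV[R]_(m1 + m2) :=
  [set y | forall i : 'I_m1, 0 <= y (lshift m2 i) 0].

Definition ones (n : nat) : 'cV[R]_n := const_mx 1.

Definition Kmat {m1 m2 n : nat} (A : 'M[R]_(m1, n)) (B : 'M[R]_(m2, n))
  : 'M[R]_(m1 + m2, n) := - col_mx A B.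
Definition rvec {m1 m2 : nat} (b : 'cV[R]_m1) (d : 'cV[R]_m2) : 'cV[R]_(m1 + m2) :=
  col_mx b d.

Definition Lhat {m n : nat} (Q : 'M[R]_n) (c : 'cV[R]_n) (K : 'M[R]_(m, n))
  (r : 'cV[R]_m) (rho : R) (x : 'cV[R]_n) (y : 'cV[R]_m) : R :=
  dotv x (Q *m x) + dotv c x + dotv y (K *m x + r) + rho * dotv x (ones n - x).

Definition gradx {m n : nat} (Q : 'M[R]_n) (c : 'cV[R]_n) (K : 'M[R]_(m, n))
  (rho : R) (x : 'cV[R]_n) (y : 'cV[R]_m) : 'cV[R]_n :=
  c + rho *: ones n + K^T *m y + 2%:R *: (Q *m x) - (2%:R * rho) *: x.

Definition grady {m n : nat} (K : 'M[R]_(m, n)) (r : 'cV[R]_m)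
  (x : 'cV[R]_n) : 'cV[R]_m := K *m x + r.

End Defs.

(* Main.v *)
Require Import Defs.
From HB Require Import structures.
From mathcomp Require Import all_boot all_order all_algebra.
From mathcomp Require Import all_classical all_reals.
From mathcomp Require Import ereal.
From mathcomp Require Import ring lra.
Import Order.TTheory GRing.Theory Num.Theory.
Local Open Scope ring_scope.
Local Open Scope classical_set_scope.



Lemma dotvC {R : realType} {n : nat} (u v : 'cV[R]_n) : dotv u v = dotv v u.
Proof. by apply: eq_bigr => i _; rewrite mulrC. Qed.

Lemma dotvDl {R : realType} {n : nat} (u v w : 'cV[R]_n) : dotv (u + v) w = dotv u w + dotv v w.
Proof. rewrite /dotv -big_split /=; apply: eq_bigr => i _; rewrite !mxE; ring. Qed.

Lemma dotvDr {R : realType} {n : nat} (u v w : 'cV[R]_n) : dotv w (u + v) = dotv w u + dotv w v.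
Proof. by rewrite dotvC dotvDl !(dotvC w). Qed.

Lemma dotvZl {R : realType} {n : nat} a (u v : 'cV[R]_n) : dotv (a *: u) v = a * dotv u v.
Proof. rewrite /dotv mulr_sumr; apply: eq_bigr => i _; rewrite !mxE; ring. Qed.

Lemma dotvZr {R : realType} {n : nat} a (u v : 'cV[R]_n) : dotv v (a *: u) = a * dotv v u.
Proof. by rewrite dotvC dotvZl dotvC. Qed.

Lemma dotvNl {R : realType} {n : nat} (u v : 'cV[R]_n) : dotv (- u) v = - dotv u v.
Proof. by rewrite -scaleN1r dotvZl mulN1r. Qed.

Lemma dotvNr {R : realType} {n : nat} (u v : 'cV[R]_n) : dotv v (- u) = - dotv v u.
Proof. by rewrite dotvC dotvNl dotvC. Qed.

Lemma dotvBl {R : realType} {n : nat} (u v w : 'cV[R]_n) : dotv (u - v) w = dotv u w - dotv v w.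
Proof. by rewrite dotvDl dotvNl. Qed.

Lemma dotvBr {R : realType} {n : nat} (u v w : 'cV[R]_n) : dotv w (u - v) = dotv w u - dotv w v.
Proof. by rewrite dotvDr dotvNr. Qed.

Lemma dotv0l {R : realType} {n : nat} (u : 'cV[R]_n) : dotv 0 u = 0.
Proof. by rewrite /dotv big1 // => i _; rewrite mxE mul0r. Qed.

Lemma dotv0r {R : realType} {n : nat} (u : 'cV[R]_n) : dotv u 0 = 0.
Proof. by rewrite dotvC dotv0l. Qed.

Lemma dotv_mulmx {R : realType} {m n : nat} (M : 'M[R]_(m, n)) u v :
  dotv u (M *m v) = dotv (M^T *m u) v.
Proof.
rewrite /dotv.
under eq_bigr do rewrite mxE big_distrr.
under [RHS]eq_bigr do rewrite mxE big_distrl.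
rewrite exchange_big; apply: eq_bigr => j _; apply: eq_bigr => i _.
rewrite !mxE /=; ring.
Qed.

Lemma dotv_ge0 {R : realType} {n : nat} (u : 'cV[R]_n) : 0 <= dotv u u.
Proof. by apply: sumr_ge0 => i _; rewrite -expr2 sqr_ge0. Qed.

Lemma dotv_eq0 {R : realType} {n : nat} (u : 'cV[R]_n) : dotv u u = 0 -> u = 0.
Proof.
move=> h; apply/matrixP => i j; rewrite mxE (ord1 j).
have hn : forall k : 'I_n, xpredT k -> 0 <= u k 0 * u k 0.
  by move=> k _; rewrite -expr2 sqr_ge0.
have := @psumr_eq0P R _ xpredT (fun i => u i 0 * u i 0) hn h i isT.
by move=> /eqP; rewrite mulf_eq0 orbb => /eqP.
Qed.

Lemma enorm_ge0 {R : realType} {n : nat} (u : 'cV[R]_n) : 0 <= enorm u.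
Proof. exact: sqrtr_ge0. Qed.

Lemma enorm_sq {R : realType} {n : nat} (u : 'cV[R]_n) : enorm u ^+ 2 = dotv u u.
Proof. by rewrite sqr_sqrtr // dotv_ge0. Qed.

Lemma enorm_eq0 {R : realType} {n : nat} (u : 'cV[R]_n) : enorm u = 0 -> u = 0.
Proof. by move=> h; apply: dotv_eq0; rewrite -enorm_sq h expr0n. Qed.

Lemma enorm0 {R : realType} {n : nat} : enorm (0 : 'cV[R]_n) = 0.
Proof. by rewrite /enorm dotv0l sqrtr0. Qed.

Lemma enormZ {R : realType} {n : nat} a (u : 'cV[R]_n) : enorm (a *: u) = `|a| * enorm u.
Proof.
rewrite /enorm dotvZl dotvZr mulrA -expr2 sqrtrM ?sqr_ge0 //.
by rewrite sqrtr_sqr.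
Qed.

Lemma enormN {R : realType} {n : nat} (u : 'cV[R]_n) : enorm (- u) = enorm u.
Proof. by rewrite -scaleN1r enormZ normrN1 mul1r. Qed.

Lemma dotv_cs {R : realType} {n : nat} (u v : 'cV[R]_n) : dotv u v <= enorm u * enorm v.
Proof.
have [hu|hu] := eqVneq (enorm u) 0.
  by rewrite (enorm_eq0 _ hu) dotv0l enorm0 mul0r.
have [hv|hv] := eqVneq (enorm v) 0.
  by rewrite (enorm_eq0 _ hv) dotv0r enorm0 mulr0.
have hp : 0 < enorm u * enorm v.
  by rewrite mulr_gt0 // lt_def ?hu ?hv enorm_ge0.
have h0 := dotv_ge0 (enorm v *: u - enorm u *: v).
rewrite !(dotvBl, dotvBr, dotvZl, dotvZr) -!enorm_sq (dotvC v u) in h0.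
have : 0 <= (enorm u * enorm v) * (enorm u * enorm v - dotv u v) by nra.
by rewrite pmulr_rge0 // subr_ge0.
Qed.

Lemma dotv_cs_abs {R : realType} {n : nat} (u v : 'cV[R]_n) : `|dotv u v| <= enorm u * enorm v.
Proof.
rewrite ler_norml dotv_cs andbT lerNl -dotvNl.
by have := dotv_cs (- u) v; rewrite enormN.
Qed.

Lemma enormD {R : realType} {n : nat} (u v : 'cV[R]_n) : enorm (u + v) <= enorm u + enorm v.
Proof.
rewrite -(ler_pXn2r (isT : (0 < 2)%N)) ?nnegrE ?addr_ge0 ?enorm_ge0 //.
rewrite enorm_sq dotvDl !dotvDr -!enorm_sq (dotvC v u).
have := dotv_cs u v; nra.
Qed.

Lemma enormB {R : realType} {n : nat} (u v : 'cV[R]_n) : enorm (u - v) <= enorm u + enorm v.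
Proof. by rewrite -(enormN v); apply: enormD. Qed.

Lemma young {R : realType} {n : nat} (u v : 'cV[R]_n) mu : 0 < mu ->
  2%:R * dotv u v <= mu * dotv u u + mu^-1 * dotv v v.
Proof.
move=> hmu.
have h0 := dotv_ge0 (mu *: u - v).
rewrite !(dotvBl, dotvBr, dotvZl, dotvZr) (dotvC v u) in h0.
have hi : 0 < mu^-1 by rewrite invr_gt0.
have : 0 <= mu^-1 * (mu * (mu * dotv u u) - mu * dotv u v - (mu * dotv u v - dotv v v)).
  by rewrite mulr_ge0 // ltW.
rewrite !mulrBr !mulrA mulVf ?gt_eqF // !mul1r.
lra.
Qed.



Lemma coord_le {R : realType} {n : nat} (v : 'cV[R]_n) j : v j 0 ^+ 2 <= dotv v v.
Proof.
rewrite /dotv (bigD1 j) //= -expr2 lerDl.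
by apply: sumr_ge0 => i _; rewrite -expr2 sqr_ge0.
Qed.

Lemma opnorm_ub {R : realType} {m n : nat} (M : 'M[R]_(m, n)) :
  has_ubound [set enorm (M *m v) | v in [set v : 'cV[R]_n | enorm v <= 1]].
Proof.
exists (Num.sqrt (\sum_i (\sum_j `|M i j|) ^+ 2)) => _ [v hv <-].
have hv1 : enorm v <= 1 := hv.
rewrite /enorm ler_sqrt; last by apply: sumr_ge0 => i _; rewrite sqr_ge0.
apply: ler_sum => i _; rewrite -expr2 mxE.
have hvj : forall j, `|v j 0| <= 1.
  move=> j; have := coord_le v j; rewrite -enorm_sq.
  have h0 := enorm_ge0 v.
  move=> h; rewrite -(ler_pXn2r (isT : (0 < 2)%N)) ?nnegrE ?normr_ge0 //.
  by rewrite real_normK ?num_real // expr1n; apply: (le_trans h); nra.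
have hs : `|\sum_j M i j * v j 0| <= \sum_j `|M i j|.
  apply: (le_trans (ler_norm_sum _ _ _)); apply: ler_sum => j _.
  rewrite normrM -[X in _ <= X]mulr1; apply: ler_wpM2l => //.
rewrite -real_normK ?num_real //.
apply: ler_pM; rewrite ?normr_ge0 //.
Qed.

Lemma opnorm_ge0 {R : realType} {m n : nat} (M : 'M[R]_(m, n)) : 0 <= opnorm M.
Proof.
have h : [set enorm (M *m v) | v in [set v : 'cV[R]_n | enorm v <= 1]] (enorm (M *m 0)).
  by exists 0 => //=; rewrite enorm0 ler01.
have := ub_le_sup (opnorm_ub M) h.
by rewrite mulmx0 enorm0.
Qed.

Lemma opnorm_bound {R : realType} {m n : nat} (M : 'M[R]_(m, n)) v :
  enorm (M *m v) <= opnorm M * enorm v.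
Proof.
have [hv|hv] := eqVneq (enorm v) 0.
  by rewrite (enorm_eq0 _ hv) mulmx0 !enorm0 mulr0.
have hp : 0 < enorm v by rewrite lt_def hv enorm_ge0.
have h : [set enorm (M *m v) | v in [set v : 'cV[R]_n | enorm v <= 1]]
           (enorm (M *m ((enorm v)^-1 *: v))).
  exists ((enorm v)^-1 *: v) => //=.
  by rewrite enormZ ger0_norm ?invr_ge0 ?enorm_ge0 // mulVf ?gt_eqF.
have := ub_le_sup (opnorm_ub M) h.
rewrite -scalemxAr enormZ ger0_norm ?invr_ge0 ?enorm_ge0 //.
by rewrite mulrC ler_pdivrMr // .
Qed.

Lemma dotv_expandB {R : realType} {n : nat} (u e : 'cV[R]_n) t :
  dotv (u - t *: e) (u - t *: e) = dotv u u - 2%:R * t * dotv u e + t ^+ 2 * dotv e e.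
Proof. rewrite !(dotvBl, dotvBr, dotvZl, dotvZr) (dotvC e u); ring. Qed.

Definition convex_set {R : realType} {n : nat} (C : set 'cV[R]_n) :=
  forall p q t, C p -> C q -> 0 <= t <= 1 -> C (p + t *: (q - p)).

Lemma proj_vi {R : realType} {n : nat} (C : set 'cV[R]_n) z p :
  convex_set C -> is_proj C z p -> forall q, C q -> dotv (z - p) (q - p) <= 0.
Proof.
move=> hC [hp hmin] q hq.
set a := dotv (z - p) (q - p); set b := dotv (q - p) (q - p).
have hb : 0 <= b by apply: dotv_ge0.
have key : forall t, 0 <= t <= 1 -> 2%:R * t * a <= t ^+ 2 * b.
  move=> t ht; have := hmin _ (hC p q t hp hq ht).
  rewrite /enorm ler_sqrt ?dotv_ge0 //.
  have -> : z - (p + t *: (q - p)) = (z - p) - t *: (q - p).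
    by rewrite opprD addrA.
  rewrite dotv_expandB -/a -/b.
  lra.
rewrite leNgt; apply/negP => ha.
have hab : 0 < a + b by lra.
set t := a / (a + b).
have ht0 : 0 < t by rewrite divr_gt0.
have ht1 : t <= 1 by rewrite ler_pdivrMr // mul1r; lra.
have htab : t * (a + b) = a by rewrite divfK ?gt_eqF.
have := key t; rewrite ht1 ltW //= => /(_ isT) hk.
nra.
Qed.

Lemma box01_convex {R : realType} (n : nat) : convex_set (box01 (R:=R) n).
Proof.
move=> p q t hp hq /andP [t0 t1] i; rewrite !mxE.
have /andP [p0 p1] := hp i; have /andP [q0 q1] := hq i.
apply/andP; split; nra.
Qed.

Lemma Yset_convex {R : realType} (m1 m2 : nat) : convex_set (Yset (R:=R) m1 m2).
Proof.
move=> p q t hp hq /andP [t0 t1] i; rewrite !mxE.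
have p0 := hp i; have q0 := hq i.
nra.
Qed.

Lemma subdiff_indic {R : realType} {n : nat} (C : set 'cV[R]_n) p v :
  C p -> (forall q, C q -> dotv v (q - p) <= 0) -> subdiff (indic C) p v.
Proof.
move=> hp hv; rewrite /subdiff /indic; split.
  by rewrite asboolT.
move=> w; rewrite asboolT // add0e.
case: (pselect (C w)) => hw.
  by rewrite asboolT // lee_fin; apply: hv.
by rewrite asboolF // leey.
Qed.



Lemma cs_real {R : realType} (al be t1 t2 d0 d1 V : R) :
  0 <= al -> 0 <= be -> 0 < al + be -> 0 < t1 -> 0 < t2 ->
  0 <= d0 -> 0 <= d1 -> 0 <= V ->
  al * d1 + be * d0 + V <=
  Num.sqrt ((al + be) ^+ 2 * t1 + t2^-1) *
  Num.sqrt (al / ((al + be) * t1) * d1 ^+ 2 + be / ((al + be) * t1) * d0 ^+ 2 + t2 * V ^+ 2).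
Proof.
move=> hal hbe ha ht1 ht2 hd0 hd1 hV.
set a := al + be.
have hat : 0 < a * t1 by rewrite mulr_gt0.
set Y := al / (a * t1) * d1 ^+ 2 + be / (a * t1) * d0 ^+ 2.
have hY : a * t1 * Y = al * d1 ^+ 2 + be * d0 ^+ 2.
  by rewrite /Y; field; apply/andP; split; rewrite gt_eqF.
have hY0 : 0 <= Y.
  by rewrite /Y addr_ge0 // mulr_ge0 ?divr_ge0 ?sqr_ge0 // ltW.
set X := al * d1 + be * d0.
have hX : X ^+ 2 <= a ^+ 2 * t1 * Y.
  have -> : a ^+ 2 * t1 * Y = a * (a * t1 * Y) by rewrite expr2; ring.
  have := mulr_ge0 (mulr_ge0 hal hbe) (sqr_ge0 (d1 - d0)).
  rewrite hY /X /a; nra.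
set P := a ^+ 2 * t1.
have hP : 0 < P by rewrite /P mulr_gt0 // exprn_gt0.
set u := t2^-1.
have hu : t2 * u = 1 by rewrite /u mulfV ?gt_eqF.
have hu0 : 0 < u by rewrite /u invr_gt0.
rewrite -sqrtrM; last by rewrite addr_ge0 ?ltW.
have hL : 0 <= X + V by rewrite /X addr_ge0 // addr_ge0 // mulr_ge0.
rewrite -[X in X <= _](ger0_norm hL) -sqrtr_sqr ler_wsqrtr //.
have key : 2%:R * X * V <= P * t2 * V ^+ 2 + u * Y.
  have h1 : 0 <= (P * t2 * V - X) ^+ 2 by rewrite sqr_ge0.
  have h2 : P * (P * t2 * V ^+ 2 + u * Y) * t2 >= P * (2%:R * X * V) * t2.
    have -> : P * (P * t2 * V ^+ 2 + u * Y) * t2 = (P * t2 * V) ^+ 2 + P * Y.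
      by rewrite /u; field; rewrite gt_eqF.
    have hX2 : X ^+ 2 <= P * Y by []. clear -hX2 h1. nra.
  rewrite -(ler_pM2l hP) -(ler_pM2r ht2); exact: h2.
have e : u * (t2 * V ^+ 2) = V ^+ 2 by rewrite mulrA (mulrC u) hu mul1r.
have hX2 : X ^+ 2 <= P * Y by [].
rewrite -/P -/u. clear -hX2 key e. nra.
Qed.



Lemma shift_sum {R : realType} (F : nat -> R) N :
  (forall k, 0 <= F k) -> F 0%N = 0 ->
  \sum_(1 <= k < N.+1) F k.-1 <= \sum_(1 <= k < N.+1) F k.
Proof.
move=> hF hF0.
have e : forall M, \sum_(1 <= k < M.+1) F k.-1 + F M = F 0%N + \sum_(1 <= k < M.+1) F k.
  elim=> [|M IH]; first by rewrite !big_geq // add0r addr0.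
  by rewrite big_nat_recr //= [X in _ = _ + X]big_nat_recr //= IH addrA.
have := e N; rewrite hF0 add0r => <-.
by rewrite lerDl.
Qed.

Lemma Lhat_diff_x {R : realType} {m n : nat} (Q : 'M[R]_n) c (K : 'M[R]_(m, n)) r rho x D y :
  Q^T = Q ->
  Lhat Q c K r rho (x + D) y - Lhat Q c K r rho x y =
  dotv (gradx Q c K rho x y) D + dotv D (Q *m D) - rho * dotv D D.
Proof.
move=> hQ; rewrite /Lhat /gradx !mulmxDr.
rewrite !(dotvDl, dotvDr, dotvBl, dotvBr, dotvZl, dotvZr, dotvNl, dotvNr).
have e1 : dotv x (Q *m D) = dotv (Q *m x) D by rewrite dotv_mulmx hQ.
have e2 : dotv y (K *m D) = dotv (K^T *m y) D by rewrite dotv_mulmx.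
rewrite e1 e2 (dotvC D (Q *m x)) (dotvC D x) (dotvC D (ones n)).
ring.
Qed.

Lemma Lhat_diff_y {R : realType} {m n : nat} (Q : 'M[R]_n) c (K : 'M[R]_(m, n)) r rho x y y' :
  Lhat Q c K r rho x y' - Lhat Q c K r rho x y = dotv (y' - y) (K *m x + r).
Proof. rewrite /Lhat dotvBl; ring. Qed.

Lemma gradx_diff {R : realType} {m n : nat} (Q : 'M[R]_n) c (K : 'M[R]_(m, n)) rho x x' y :
  gradx Q c K rho x' y - gradx Q c K rho x y =
  2%:R *: (Q *m (x' - x)) - (2%:R * rho) *: (x' - x).
Proof.
rewrite /gradx mulmxBr.
move: (Q *m x') (Q *m x) (K^T *m y) => a b e.
apply/matrixP => i j; rewrite !mxE; ring.
Qed.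

Lemma vec_sx {R : realType} {n : nat} (t : R) (a b g1 g0 : 'cV[R]_n) : t != 0 ->
  t^-1 *: (a - b) + g1 - g0 = g1 + t^-1 *: (a - t *: g0 - b).
Proof. move=> ht; apply/matrixP => i j; rewrite !mxE; field; exact: ht. Qed.

Lemma vec_sy {R : realType} {n : nat} (t : R) (a b g1 h : 'cV[R]_n) : t != 0 ->
  t^-1 *: (a - b) - g1 + h = - g1 + t^-1 *: (a + t *: h - b).
Proof. move=> ht; apply/matrixP => i j; rewrite !mxE; field; exact: ht. Qed.

Lemma vec_sy2 {R : realType} {n : nat} (t : R) (a b u v r : 'cV[R]_n) :
  t^-1 *: (a - b) - (u + r) + (v + r) = - (t^-1 *: (b - a)) + (v - u).
Proof. apply/matrixP => i j; rewrite !mxE; ring. Qed.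

Lemma vec_xb {R : realType} {n : nat} (x0 x1 x2 : 'cV[R]_n) :
  2%:R *: x1 - x0 - x2 = (x1 - x0) - (x2 - x1).
Proof. apply/matrixP => i j; rewrite !mxE; ring. Qed.

Lemma enorm_xb {R : realType} {n : nat} (a b : 'cV[R]_n) :
  enorm (2%:R *: a - b) ^+ 2 <= 6%:R * enorm a ^+ 2 + 3%:R * enorm b ^+ 2.
Proof.
rewrite !enorm_sq !(dotvBl, dotvBr, dotvZl, dotvZr) (dotvC b a).
have := young a (- b) 1 ltr01; rewrite invr1 !mul1r dotvNr dotvNl dotvNr opprK.
have := dotv_ge0 a; have := dotv_ge0 b.
lra.
Qed.

Lemma enorm_sqD {R : realType} {n : nat} (a b : 'cV[R]_n) mu : 0 < mu ->
  enorm (a + b) ^+ 2 <= (1 + mu) * enorm a ^+ 2 + (1 + mu^-1) * enorm b ^+ 2.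
Proof.
move=> hmu; rewrite !enorm_sq !(dotvDl, dotvDr) (dotvC b a).
have := young a b mu hmu.
lra.
Qed.

Lemma opnorm_sq {R : realType} {m n : nat} (M : 'M[R]_(m, n)) v :
  enorm (M *m v) ^+ 2 <= opnorm M ^+ 2 * enorm v ^+ 2.
Proof.
rewrite -exprMn ler_pXn2r // ?nnegrE ?enorm_ge0 ?mulr_ge0 ?opnorm_ge0 ?enorm_ge0 //.
exact: opnorm_bound.
Qed.



Lemma step_x {R : realType} {m n : nat} (Q : 'M[R]_n) c (K : 'M[R]_(m, n)) rho tau1
  (xp xk : 'cV[R]_n) (yk : 'cV[R]_m) :
  0 < tau1 -> box01 n xp ->
  is_proj (box01 n) (xp - tau1 *: gradx Q c K rho xp yk) xk ->
  (exists v, subdiff (indic (box01 n)) xk v /\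
     tau1^-1 *: (xp - xk) + gradx Q c K rho xk yk - gradx Q c K rho xp yk
     = gradx Q c K rho xk yk + v)
  /\ enorm (xk - xp) ^+ 2 + tau1 * dotv (gradx Q c K rho xp yk) (xk - xp) <= 0.
Proof.
move=> ht hxp hpr.
have vi := proj_vi _ _ _ (box01_convex n) hpr.
have hxk : box01 n xk := hpr.1.
split.
  exists (tau1^-1 *: (xp - tau1 *: gradx Q c K rho xp yk - xk)); split.
    apply: subdiff_indic => // q hq; rewrite dotvZl pmulr_rle0 ?invr_gt0 //.
    exact: vi.
  by rewrite vec_sx // gt_eqF.
have := vi xp hxp.
move: (gradx Q c K rho xp yk) => G.
have -> : xp - tau1 *: G - xk = - (xk - xp) - tau1 *: G.
  by apply/matrixP => i j; rewrite !mxE; ring.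
have -> : xp - xk = - (xk - xp) by rewrite opprB.
move: (xk - xp) => D.
rewrite enorm_sq !(dotvBl, dotvNl, dotvNr, dotvZl) (dotvC G D).
lra.
Qed.

Lemma step_y {R : realType} (m1 m2 : nat) tau2 (yp yk h : 'cV[R]_(m1 + m2)) :
  0 < tau2 -> Yset m1 m2 yp ->
  is_proj (Yset m1 m2) (yp + tau2 *: h) yk ->
  (forall g1, exists w, subdiff (indic (Yset m1 m2)) yk w /\
     tau2^-1 *: (yp - yk) - g1 + h = - g1 + w)
  /\ enorm (yk - yp) ^+ 2 <= tau2 * dotv h (yk - yp).
Proof.
move=> ht hyp hpr.
have vi := proj_vi _ _ _ (Yset_convex m1 m2) hpr.
have hyk : Yset m1 m2 yk := hpr.1.
split.
  move=> g1; exists (tau2^-1 *: (yp + tau2 *: h - yk)); split.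
    apply: subdiff_indic => // q hq; rewrite dotvZl pmulr_rle0 ?invr_gt0 //.
    exact: vi.
  by rewrite vec_sy // gt_eqF.
have := vi yp hyp.
have -> : yp + tau2 *: h - yk = - (yk - yp) + tau2 *: h.
  by apply/matrixP => i j; rewrite !mxE; ring.
have -> : yp - yk = - (yk - yp) by rewrite opprB.
move: (yk - yp) => D.
rewrite enorm_sq !(dotvDl, dotvNl, dotvNr, dotvZl) (dotvC h D).
lra.
Qed.

Lemma descent {R : realType} {m n : nat} (Q : 'M[R]_n) c (K : 'M[R]_(m, n)) r rho tau1
  (xp xk : 'cV[R]_n) (yk : 'cV[R]_m) :
  Q^T = Q -> 0 <= rho -> 0 < tau1 -> opnorm Q * tau1 <= 4%:R^-1 ->
  enorm (xk - xp) ^+ 2 + tau1 * dotv (gradx Q c K rho xp yk) (xk - xp) <= 0 ->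
  Lhat Q c K r rho xk yk - Lhat Q c K r rho xp yk
    <= - (3%:R / 4%:R) * tau1^-1 * enorm (xk - xp) ^+ 2.
Proof.
move=> hQ hrho ht hq hst.
have e : xk = xp + (xk - xp) by rewrite addrC subrK.
rewrite [X in Lhat _ _ _ _ _ X _]e Lhat_diff_x //.
move: hst; move: (xk - xp) (gradx Q c K rho xp yk) => D G hst.
have h1 : dotv D (Q *m D) <= opnorm Q * enorm D ^+ 2.
  apply: (le_trans (dotv_cs _ _)).
  have := opnorm_bound Q D; have := enorm_ge0 D; have := enorm_ge0 (Q *m D).
  nra.
have h2 : 0 <= rho * dotv D D by rewrite mulr_ge0 // dotv_ge0.
have it : tau1 * tau1^-1 = 1 by rewrite mulfV ?gt_eqF.
have it0 : 0 < tau1^-1 by rewrite invr_gt0.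
have hD0 : 0 <= enorm D ^+ 2 by rewrite sqr_ge0.
have h3 : dotv G D <= - tau1^-1 * enorm D ^+ 2.
  have : tau1^-1 * (enorm D ^+ 2 + tau1 * dotv G D) <= 0.
    by rewrite pmulr_rle0.
  have e2 : tau1^-1 * (tau1 * dotv G D) = dotv G D by rewrite mulrA mulVf ?gt_eqF // mul1r.
  rewrite mulrDr e2; lra.
have h4 : opnorm Q * enorm D ^+ 2 <= 4%:R^-1 * tau1^-1 * enorm D ^+ 2.
  have := ler_wpM2r (mulr_ge0 (ltW it0) hD0) hq.
  rewrite -!mulrA (mulrA tau1) it mul1r //.
rewrite -enorm_sq in h2 *; lra.
Qed.

Lemma young_step {R : realType} {m n : nat} (K : 'M[R]_(m, n)) (r d : 'cV[R]_m)
  (xb xp : 'cV[R]_n) tau1 tau2 (qq : R) :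
  0 < tau1 -> 0 < tau2 -> tau1 * tau2 * opnorm K ^+ 2 <= 2%:R^-1 ->
  enorm d ^+ 2 <= tau2 * dotv (K *m xb + r) d ->
  enorm xb ^+ 2 <= 6%:R * enorm xp ^+ 2 + 3%:R * qq -> 0 <= qq ->
  4%:R / 3%:R * dotv d (K *m xp + r) + tau2^-1 * enorm d ^+ 2 <=
  86%:R / 15%:R * tau1^-1 * enorm xp ^+ 2 + 11%:R / 5%:R * tau1^-1 * qq
  + 46%:R / 3%:R * tau2 * enorm r ^+ 2.
Proof.
move=> ht1 ht2 hK hd hxb hqq.
set h := K *m xb + r; set g := K *m xp + r.
have it2 : tau2 * tau2^-1 = 1 by rewrite mulfV ?gt_eqF.
have it1 : tau1 * tau1^-1 = 1 by rewrite mulfV ?gt_eqF.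
have i20 : 0 < tau2^-1 by rewrite invr_gt0.
have i10 : 0 < tau1^-1 by rewrite invr_gt0.
have hd1 : enorm d <= tau2 * enorm h.
  have hcs : dotv h d <= enorm h * enorm d by apply: dotv_cs.
  have hd0 := enorm_ge0 d.
  have hp : 0 <= tau2 * enorm h by rewrite mulr_ge0 ?enorm_ge0 ?ltW.
  have hh : enorm d ^+ 2 <= tau2 * enorm h * enorm d.
    apply: (le_trans hd); rewrite -mulrA ler_pM2l //.
  move: hp hh hd0; move: (tau2 * enorm h) (enorm d) => p e hp hh he.
  nra.
have A1 : tau2^-1 * enorm d ^+ 2 <= tau2 * enorm h ^+ 2.
  have hd2 : enorm d ^+ 2 <= tau2 ^+ 2 * enorm h ^+ 2.
    rewrite -exprMn ler_pXn2r // ?nnegrE ?enorm_ge0 ?mulr_ge0 ?enorm_ge0 ?ltW //.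
  have e3 : tau2^-1 * (tau2 ^+ 2 * enorm h ^+ 2) = tau2 * enorm h ^+ 2.
    by rewrite expr2 !mulrA mulVf ?gt_eqF // mul1r.
  by rewrite -e3; exact: (ler_wpM2l (ltW i20) hd2).
have A2 : 2%:R * dotv d g <= tau2^-1 / 3%:R * enorm d ^+ 2 + 3%:R * tau2 * enorm g ^+ 2.
  have hmu : 0 < (3%:R * tau2)^-1 by rewrite invr_gt0 mulr_gt0.
  have := young d g _ hmu; rewrite invrK -!enorm_sq.
  have e : (3%:R * tau2)^-1 = tau2^-1 / 3%:R by rewrite invfM mulrC.
  by rewrite e.
have A3 : tau2 * enorm h ^+ 2 <= 6%:R / 5%:R * (tau2 * enorm (K *m xb) ^+ 2)
          + 6%:R * (tau2 * enorm r ^+ 2).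
  have hmu5 : (0 : R) < 5%:R^-1 by rewrite invr_gt0.
  have := ler_wpM2l (ltW ht2) (enorm_sqD (K *m xb) r _ hmu5); rewrite invrK.
  move=> H; apply: (le_trans H); rewrite -/h.
  rewrite le_eqVlt; apply/orP; left; apply/eqP; by field.
have A4 : tau2 * enorm g ^+ 2 <= 4%:R / 3%:R * (tau2 * enorm (K *m xp) ^+ 2)
          + 4%:R * (tau2 * enorm r ^+ 2).
  have hmu3 : (0 : R) < 3%:R^-1 by rewrite invr_gt0.
  have := ler_wpM2l (ltW ht2) (enorm_sqD (K *m xp) r _ hmu3); rewrite invrK.
  move=> H; apply: (le_trans H).
  rewrite le_eqVlt; apply/orP; left; apply/eqP; by field.
set Z := tau2 * opnorm K ^+ 2.
have hZ0 : 0 <= Z by rewrite mulr_ge0 ?sqr_ge0 ?ltW.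
have A5 : tau2 * enorm (K *m xb) ^+ 2 <= Z * enorm xb ^+ 2.
  by rewrite /Z -mulrA; exact: (ler_wpM2l (ltW ht2) (opnorm_sq K xb)).
have A6 : tau2 * enorm (K *m xp) ^+ 2 <= Z * enorm xp ^+ 2.
  by rewrite /Z -mulrA; exact: (ler_wpM2l (ltW ht2) (opnorm_sq K xp)).
have A7 : Z * enorm xb ^+ 2 <= Z * (6%:R * enorm xp ^+ 2 + 3%:R * qq).
  by rewrite ler_wpM2l.
have hZ : Z <= 2%:R^-1 * tau1^-1.
  have := ler_wpM2l (ltW i10) hK.
  have e : tau1^-1 * (tau1 * tau2 * opnorm K ^+ 2) = Z.
    by rewrite /Z !mulrA mulVf ?gt_eqF // mul1r.
  by rewrite e mulrC.
have hxp0 : 0 <= enorm xp ^+ 2 by rewrite sqr_ge0.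
have A8 : Z * (6%:R * enorm xp ^+ 2 + 3%:R * qq)
          <= 2%:R^-1 * tau1^-1 * (6%:R * enorm xp ^+ 2 + 3%:R * qq).
  by rewrite ler_wpM2r // addr_ge0 // mulr_ge0.
have A9 : Z * enorm xp ^+ 2 <= 2%:R^-1 * tau1^-1 * enorm xp ^+ 2.
  by rewrite ler_wpM2r.
clearbody Z h g.
lra.
Qed.



Lemma tele_sum {R : realType} (F : nat -> R) N :
  \sum_(1 <= k < N.+1) (F k.-1 - F k) = F 0%N - F N.
Proof.
elim: N => [|N IH]; first by rewrite big_geq // subrr.
rewrite big_nat_recr //= IH; ring.
Qed.

Theorem mainTheorem4 (R : realType) (n m1 m2 : nat)
  (Q : 'M[R]_n) (c : 'cV[R]_n) (A : 'M[R]_(m1, n)) (b : 'cV[R]_m1)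
  (B : 'M[R]_(m2, n)) (d : 'cV[R]_m2) (rho tau1 tau2 Phistar : R)
  (x : nat -> 'cV[R]_n) (y : nat -> 'cV[R]_(m1 + m2)) :
  (0 < n)%N -> (0 < m1)%N -> (0 < m2)%N ->
  Q^T = Q -> 0 <= rho -> 0 < tau1 -> 0 < tau2 ->
  let K := Kmat A B in
  let r := rvec b d in
  let L := 2%:R * (opnorm Q + rho) in
  let xbar := fun k => 2%:R *: x k - x k.-1 in
  tau1 * tau2 * opnorm K ^+ 2 <= 2%:R^-1 ->
  tau1 <= (2%:R * L)^-1 ->
  box01 n (x 0%N) -> Yset m1 m2 (y 0%N) ->
  (forall k, (1 <= k)%N ->
     is_proj (Yset m1 m2) (y k.-1 + tau2 *: (K *m xbar k.-1 + r)) (y k)) ->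
  (forall k, (1 <= k)%N ->
     is_proj (box01 n) (x k.-1 - tau1 *: gradx Q c K rho (x k.-1) (y k)) (x k)) ->
  (forall u v, box01 n u -> Yset m1 m2 v -> Phistar <= Lhat Q c K r rho u v) ->
  let sx := fun k => tau1^-1 *: (x k.-1 - x k)
                     + gradx Q c K rho (x k) (y k) - gradx Q c K rho (x k.-1) (y k) in
  let sy := fun k => tau2^-1 *: (y k.-1 - y k)
                     - grady K r (x k) + grady K r (xbar k.-1) in
  forall N : nat, (1 <= N)%N ->
  exists k0 : nat, [/\ (1 <= k0 <= N)%N,
    (exists v, subdiff (indic (box01 n)) (x k0) v /\
               sx k0 = gradx Q c K rho (x k0) (y k0) + v),
    (exists w, subdiff (indic (Yset m1 m2)) (y k0) w /\
               sy k0 = - grady K r (x k0) + w) &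
    enorm (sx k0) + enorm (sy k0) <=
      2%:R * Num.sqrt ((2%:R * opnorm K + 3%:R / (2%:R * tau1)) ^+ 2 * tau1 + tau2^-1)
           * Num.sqrt ((Lhat Q c K r rho (x 0%N) (y 0%N) - Phistar) / N%:R
                       + 2%:R / (tau1 * N%:R) * \sum_(1 <= k < N.+1) enorm (x k.-1) ^+ 2
                       + 4%:R * tau2 * enorm r ^+ 2)].
Proof.
move=> hn hm1 hm2 hQ hrho ht1 ht2 K r L xbar hKt hLt hx0 hy0 hy hx hPhi sx sy N hN.
have kap0 : 0 <= opnorm K := opnorm_ge0 K.
have q0 : 0 <= opnorm Q := opnorm_ge0 Q.
have hL00 : 0 <= L by rewrite /L mulr_ge0 // addr_ge0.
have hL0 : 0 < L.
  rewrite lt_def hL00 andbT; apply/negP => /eqP hL0.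
  by move: hLt; rewrite hL0 mulr0 invr0; lra.
have hLt2 : tau1 * (2%:R * L) <= 1.
  have := ler_wpM2r (ltW (mulr_gt0 (ltr0n _ 2) hL0)) hLt.
  by rewrite mulVf // gt_eqF // mulr_gt0.
have hqt : opnorm Q * tau1 <= 4%:R^-1.
  have := mulr_ge0 hrho (ltW ht1); rewrite /L in hLt2; lra.
have i10 : 0 < tau1^-1 by rewrite invr_gt0.
have i20 : 0 < tau2^-1 by rewrite invr_gt0.
have hLi : L <= 2%:R^-1 * tau1^-1.
  have e : tau1^-1 * (tau1 * (2%:R * L)) = 2%:R * L.
    by rewrite mulKf ?gt_eqF.
  have := ler_wpM2l (ltW i10) hLt2; rewrite e mulr1 => H; lra.
have hxin : forall k, box01 n (x k).
  by case=> [|k] //; exact: (hx k.+1 isT).1.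
have hyin : forall k, Yset m1 m2 (y k).
  by case=> [|k] //; exact: (hy k.+1 isT).1.
have SX : forall k, (1 <= k)%N -> _ :=
  fun k hk => step_x Q c K rho tau1 (x k.-1) (x k) (y k) ht1 (hxin _) (hx k hk).
have SY : forall k, (1 <= k)%N -> _ :=
  fun k hk => step_y m1 m2 tau2 (y k.-1) (y k) (K *m xbar k.-1 + r) ht2 (hyin _) (hy k hk).

set al := 3%:R / (2%:R * tau1) + opnorm K.
set be := opnorm K.
have al0 : 0 <= al by rewrite /al addr_ge0 // divr_ge0 // mulr_ge0 // ltW.
have ab0 : 0 < al + be.
  by rewrite /al /be ltr_wpDr // ltr_wpDr // divr_gt0 // mulr_gt0.
have F3 : forall k, (1 <= k)%N -> enorm (sx k) + enorm (sy k) <=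
    al * enorm (x k - x k.-1) + be * enorm (x k.-1 - x k.-1.-1)
    + tau2^-1 * enorm (y k - y k.-1).
  move=> k hk.
  have e1 : sx k = tau1^-1 *: (x k.-1 - x k)
      + (gradx Q c K rho (x k) (y k) - gradx Q c K rho (x k.-1) (y k)).
    by rewrite /sx -addrA.
  have b1 : enorm (sx k) <= tau1^-1 * enorm (x k - x k.-1) + L * enorm (x k - x k.-1).
    rewrite e1; apply: (le_trans (enormD _ _)); apply: lerD.
      rewrite enormZ ger0_norm; last exact: ltW i10.
      by rewrite -opprB enormN.
    rewrite gradx_diff; apply: (le_trans (enormB _ _)).
    rewrite !enormZ !ger0_norm ?mulr_ge0 //.
    have := opnorm_bound Q (x k - x k.-1); rewrite /L; lra.
  have e2 : sy k = - (tau2^-1 *: (y k - y k.-1))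
      + K *m ((x k.-1 - x k.-1.-1) - (x k - x k.-1)).
    by rewrite /sy /grady vec_sy2 -mulmxBr /xbar /= vec_xb.
  have b2 : enorm (sy k) <= tau2^-1 * enorm (y k - y k.-1)
      + opnorm K * (enorm (x k.-1 - x k.-1.-1) + enorm (x k - x k.-1)).
    rewrite e2; apply: (le_trans (enormD _ _)).
    rewrite enormN enormZ (ger0_norm (ltW i20)) lerD2l.
    apply: (le_trans (opnorm_bound _ _)); apply: ler_wpM2l => //; exact: enormB.
  have e3 : 3%:R / (2%:R * tau1) = tau1^-1 + 2%:R^-1 * tau1^-1.
    by field; rewrite gt_eqF.
  have := ler_wpM2r (enorm_ge0 (x k - x k.-1)) hLi.
  rewrite /al /be e3; lra.
pose D := fun j => enorm (x j - x j.-1) ^+ 2.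
set c1 := al / ((al + be) * tau1).
set c2 := be / ((al + be) * tau1).
pose W := fun k => c1 * D k + c2 * D k.-1 + tau2^-1 * enorm (y k - y k.-1) ^+ 2.
set C := (2%:R * opnorm K + 3%:R / (2%:R * tau1)) ^+ 2 * tau1 + tau2^-1.
have eab : al + be = 2%:R * opnorm K + 3%:R / (2%:R * tau1) by rewrite /al /be; ring.
have F3' : forall k, (1 <= k)%N ->
    enorm (sx k) + enorm (sy k) <= Num.sqrt C * Num.sqrt (W k).
  move=> k hk; apply: (le_trans (F3 k hk)).
  have := cs_real _ _ _ _ _ _ _ al0 kap0 ab0 ht1 ht2 (enorm_ge0 (x k.-1 - x k.-1.-1))
    (enorm_ge0 (x k - x k.-1)) (mulr_ge0 (ltW i20) (enorm_ge0 (y k - y k.-1))).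
  have e4 : tau2 * (tau2^-1 * enorm (y k - y k.-1)) ^+ 2
            = tau2^-1 * enorm (y k - y k.-1) ^+ 2.
    by field; rewrite gt_eqF.
  by rewrite e4 /C -eab.

pose Phi := fun j => Lhat Q c K r rho (x j) (y j).
have F4 : forall k, (1 <= k)%N ->
    tau1^-1 * D k <= 4%:R / 3%:R * (Phi k.-1 - Phi k)
                     + 4%:R / 3%:R * dotv (y k - y k.-1) (K *m x k.-1 + r).
  move=> k hk.
  have h1 := descent Q c K r rho tau1 (x k.-1) (x k) (y k) hQ hrho ht1 hqt (SX k hk).2.
  have h2 := Lhat_diff_y Q c K r rho (x k.-1) (y k.-1) (y k).
  rewrite /D /Phi; lra.
pose Fq := fun j => if (0 < j)%N then enorm (x j.-1) ^+ 2 else 0.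
have Fq0 : forall j, 0 <= Fq j.
  by move=> [|j]; rewrite /Fq //= sqr_ge0.
have hxb : forall j, enorm (xbar j) ^+ 2 <= 6%:R * enorm (x j) ^+ 2 + 3%:R * Fq j.
  case=> [|j].
    have -> : xbar 0%N = x 0%N.
      by rewrite /xbar /=; apply/matrixP => i jj; rewrite !mxE; ring.
    rewrite /Fq /=; have := sqr_ge0 (enorm (x 0%N)); lra.
  by rewrite /xbar /Fq /=; exact: enorm_xb.
have F5 : forall k, (1 <= k)%N ->
    4%:R / 3%:R * dotv (y k - y k.-1) (K *m x k.-1 + r)
    + tau2^-1 * enorm (y k - y k.-1) ^+ 2 <=
    86%:R / 15%:R * tau1^-1 * enorm (x k.-1) ^+ 2 + 11%:R / 5%:R * tau1^-1 * Fq k.-1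
    + 46%:R / 3%:R * tau2 * enorm r ^+ 2.
  move=> k hk.
  exact: (young_step _ _ _ _ _ _ _ _ ht1 ht2 hKt (SY k hk).2 (hxb k.-1) (Fq0 _)).

have hN0 : (0 : R) < N%:R by rewrite ltr0n.
have hPhiN : Phistar <= Phi N := hPhi _ _ (hxin N) (hyin N).
have hPhi0 : Phistar <= Phi 0%N := hPhi _ _ (hxin 0%N) (hyin 0%N).
set S := \sum_(1 <= k < N.+1) enorm (x k.-1) ^+ 2.
have hS0 : 0 <= S by apply: sumr_ge0 => k _; rewrite sqr_ge0.
set E := (Lhat Q c K r rho (x 0%N) (y 0%N) - Phistar) / N%:R
         + 2%:R / (tau1 * N%:R) * S + 4%:R * tau2 * enorm r ^+ 2.
have hNE : N%:R * (4%:R * E) = 4%:R * (Phi 0%N - Phistar) + 8%:R * tau1^-1 * S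
                               + 16%:R * tau2 * enorm r ^+ 2 * N%:R.
  rewrite /E /Phi; field.
  by apply/andP; split; rewrite gt_eqF.
set SD := \sum_(1 <= k < N.+1) D k.
set SDm := \sum_(1 <= k < N.+1) D k.-1.
set SE := \sum_(1 <= k < N.+1) tau2^-1 * enorm (y k - y k.-1) ^+ 2.
set SDot := \sum_(1 <= k < N.+1) dotv (y k - y k.-1) (K *m x k.-1 + r).
set SFq := \sum_(1 <= k < N.+1) Fq k.-1.
have eW : \sum_(1 <= k < N.+1) W k = c1 * SD + c2 * SDm + SE.
  by rewrite /W !big_split /= !mulr_sumr.
have hD : SDm <= SD.
  apply: shift_sum; first by move=> j; rewrite /D sqr_ge0.
  by rewrite /D subrr enorm0 expr0n.
have hc : c1 + c2 = tau1^-1.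
  rewrite /c1 /c2; field.
  by apply/andP; split; rewrite gt_eqF.
have c20 : 0 <= c2 by rewrite /c2 divr_ge0 // mulr_ge0 // ltW.
have i4 : tau1^-1 * SD <= 4%:R / 3%:R * (Phi 0%N - Phi N) + 4%:R / 3%:R * SDot.
  rewrite /SD mulr_sumr.
  apply: (le_trans (ler_sum_nat (fun k hk => F4 k (elimT andP hk).1))).
  by rewrite big_split /= -!mulr_sumr tele_sum.
have i5 : 4%:R / 3%:R * SDot + SE <=
    86%:R / 15%:R * tau1^-1 * S + 11%:R / 5%:R * tau1^-1 * SFq
    + 46%:R / 3%:R * tau2 * enorm r ^+ 2 * N%:R.
  rewrite /SDot /SE mulr_sumr -big_split /=.
  apply: (le_trans (ler_sum_nat (fun k hk => F5 k (elimT andP hk).1))).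
  rewrite !big_split /= sumr_const_nat subn1 /= -!mulr_sumr mulr_natr.
  by [].
have hFq : SFq <= S.
  apply: (le_trans (shift_sum Fq N Fq0 _)) => //.
  rewrite le_eqVlt; apply/orP; left; apply/eqP.
  by apply: eq_big_nat => k /andP [hk _]; rewrite /Fq hk.
have hsumW : \sum_(1 <= k < N.+1) W k <= N%:R * (4%:R * E).
  rewrite eW hNE.
  have p1 := ler_wpM2l c20 hD.
  have p2 : c1 * SD + c2 * SD = tau1^-1 * SD by rewrite -mulrDl hc.
  have p3 := ler_wpM2l (ltW i10) hFq.
  have p4 := mulr_ge0 (ltW i10) hS0.
  have p5 : 0 <= tau2 * enorm r ^+ 2 * N%:R.
    by apply: mulr_ge0; [apply: mulr_ge0; [exact: ltW | exact: sqr_ge0] | exact: ltW].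
  lra.

have [k0 hk0 hWk0] : exists2 k, (1 <= k <= N)%N & W k <= 4%:R * E.
  case: (pselect (exists2 k, (1 <= k <= N)%N & W k <= 4%:R * E)) => // hne.
  exfalso.
  have hlt : forall k, (1 <= k < N.+1)%N -> 4%:R * E < W k.
    move=> k hk; rewrite ltNge; apply/negP => hw; apply: hne; exists k => //.
  have hN1 : (1 < N.+1)%N by rewrite ltnS.
  have := ltr_sum_nat hN1 hlt.
  rewrite sumr_const_nat subn1 /=.
  move: hsumW; rewrite mulr_natl => hs.
  by rewrite ltNge hs.
have h1 : (1 <= k0)%N by case/andP: hk0.
exists k0; split => //.
- exact: (SX k0 h1).1.
- exact: ((SY k0 h1).1 (grady K r (x k0))).
apply: (le_trans (F3' k0 h1)).
have hsW : Num.sqrt (W k0) <= 2%:R * Num.sqrt E.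
  apply: (le_trans (ler_wsqrtr hWk0)).
  have e : (4%:R : R) = 2%:R ^+ 2 by rewrite expr2 -natrM.
  by rewrite sqrtrM ?e ?sqrtr_sqr ?ger0_norm // sqr_ge0.
have := ler_wpM2l (sqrtr_ge0 C) hsW.
move=> H; apply: (le_trans H); rewrite le_eqVlt; apply/orP; left; apply/eqP; ring.
Qed.
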